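(* Let $(s_0,s_1,\dots)$ and $(\delta_0,\delta_1,\dots)$ be non-negative real sequences with $s_{k+1}\le\delta_k s_k+c$ for all $k$, where $c\ge0$, and $\sum_{t=0}^\infty\delta_t\le L$. Then for all $t$, $s_t\le e^{L}\left(e^{-t}s_0+c\frac{e}{e-1}\right)$. *)

(* Defs.v *)
From HB Require Import structures.
From mathcomp Require Import all_boot all_order all_algebra.
From mathcomp Require Import all_classical all_reals all_analysis.
Set Implicit Arguments. Unset Strict Implicit. Unset Printing Implicit Defensive.

(* Main.v *)
Require Import Defs.
From HB Require Import structures.
From mathcomp Require Import all_boot all_order all_algebra.
From mathcomp Require Import all_classical all_reals all_analysis.
From mathcomp Require Import ring lra.
Import Order.TTheory GRing.Theory Num.Theory.
Local Open Scope ring_scope.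

Lemma expR_nat (R : realType) (t : nat) :
  expR (- (t%:R)) = expR (-1) ^+ t :> R.
Proof.
elim: t => [|t IH]; first by rewrite oppr0 expR0 expr0.
by rewrite exprSr -IH -expRD -natr1 opprD.
Qed.

Theorem lemma3 (R : realType) (s delta : nat -> R) (c L : R)
  (hs : forall k, 0 <= s k) (hd : forall k, 0 <= delta k) (hc : 0 <= c)
  (hrec : forall k, s k.+1 <= delta k * s k + c)
  (hsum : (\sum_(0 <= t <oo) (delta t)%:E <= L%:E)%E) :
  forall t : nat,
    s t <= expR L * (expR (- (t%:R)) * s 0 + c * (expR 1 / (expR 1 - 1))).
Proof.
set r := expR (-1 : R).
have r0 : 0 <= r by apply: expR_ge0.
have r1 : r < 1 by rewrite /r expR_lt1 ltrN10.
set S := fun t => \sum_(0 <= k < t) delta k.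
set G := fun t => \sum_(0 <= i < t) r ^+ i.
have S0 t : 0 <= S t by apply: sumr_ge0 => i _.
have SL t : S t <= L.
  rewrite -lee_fin; apply: le_trans hsum.
  rewrite /S -sumEFin; apply: nneseries_lim_ge => n _ _; exact: hd.
have G0 t : 0 <= G t by apply: sumr_ge0 => i _; exact: exprn_ge0.
have GS t : G t.+1 = 1 + r * G t.
  rewrite /G big_nat_recl // expr0 mulr_sumr; congr (_ + _).
  by apply: eq_bigr => i _; rewrite exprS.
have Gb t : G t <= (1 - r)^-1.
  have h1r : 0 < 1 - r by rewrite subr_gt0.
  elim: t => [|t IH]; first by rewrite /G big_geq // invr_ge0 ltW.
  rewrite GS.
  have -> : (1 - r)^-1 = 1 + r * (1 - r)^-1.
    by field; rewrite lt0r_neq0.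
  by rewrite lerD2l ler_wpM2l.
have inv t : s t <= expR (S t) * (r ^+ t * s 0 + c * G t).
  elim: t => [|t IH].
    by rewrite /S /G !big_geq // expR0 expr0 mulr0 addr0 !mul1r.
  have hdt : delta t <= expR (delta t) * r.
    rewrite /r -expRD; have := expR_ge1Dx (delta t - 1).
    by rewrite addrCA subrr addr0.
  apply: (le_trans (hrec t)).
  have SS : S t.+1 = S t + delta t by rewrite /S big_nat_recr.
  have e1 : 1 <= expR (S t + delta t).
    by apply: le_trans (expR_ge1Dx _); rewrite lerDl addr_ge0.
  have -> : expR (S t.+1) * (r ^+ t.+1 * s 0 + c * G t.+1) =
     expR (delta t) * r * (expR (S t) * (r ^+ t * s 0 + c * G t)) + expR (S t + delta t) * c.
    by rewrite SS GS !expRD exprS; ring.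
  apply: lerD; last by rewrite ler_peMl.
  apply: ler_pM => //.
move=> t.
apply: (le_trans (inv t)).
rewrite expR_nat -/r.
have hE : 0 <= r ^+ t * s 0 + c * G t.
  by rewrite addr_ge0 ?mulr_ge0 ?exprn_ge0.
apply: ler_pM; first exact: expR_ge0.
  exact: hE.
  by rewrite ler_expR.
rewrite lerD2l ler_wpM2l //.
have -> : expR 1 / (expR 1 - 1) = (1 - r)^-1.
  rewrite /r expRN.
  have e1 : expR 1 != 0 :> R by rewrite gt_eqF // expR_gt0.
  have e2 : expR 1 - 1 != 0 :> R by rewrite subr_eq0 gt_eqF // expR_gt1.
  by field; rewrite e1 e2.
exact: Gb.
Qed.
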